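(* Let $\mathcal K$ be a variety of WHB-algebras that has a tense companion $\mathcal N$. Then $\mathcal K$ has the amalgamation property if and only if $\mathcal N$ has the amalgamation property.
   Context: A WHB-algebra is an algebra $(A,\wedge,\vee,\to,\leftarrow,0,1)$ such that $(A,\wedge,\vee,0,1)$ is a bounded distributive lattice and for all $a,b,c\in A$: $a\to a=1$; $a\to(b\wedge c)=(a\to b)\wedge(a\to c)$; $(a\vee b)\to c=(a\to c)\wedge(b\to c)$; $(a\to b)\wedge(b\to c)\le a\to c$; $a\leftarrow a=0$; $(a\vee b)\leftarrow c=(a\leftarrow c)\vee(b\leftarrow c)$; $a\leftarrow(b\wedge c)=(a\leftarrow b)\vee(a\leftarrow c)$; $a\leftarrow c\le(a\leftarrow b)\vee(b\leftarrow c)$; $a\wedge((a\to b)\leftarrow 0)\le b$; $a\le b\vee(1\to(a\leftarrow b))$. A tense algebra is $(\mathbf B,G,H)$ with $\mathbf B$ a Boolean algebra and unary $G,H$ such that, with $P(x)=\neg H(\neg x)$, $F(x)=\neg G(\neg x)$: $P(x)\le y\iff x\le G(y)$ and $F(x)\le y\iff x\le H(y)$. $M(\mathbf B,G,H)$ is the WHB-algebra on $B$ with $x\to y=G(\neg x\vee y)$, $x\leftarrow y=P(x\wedge\neg y)$. For a WHB-algebra $\mathbf A$: $X(\mathbf A)$ is its set of prime filters, $\sigma_{\mathbf A}(a)=\{P\colon a\in P\}$, $\tau_{\mathbf A}$ the topology with subbase $\{\sigma_{\mathbf A}(a)\}\cup\{X(\mathbf A)\setminus\sigma_{\mathbf A}(a)\}$;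 $(P,Q)\in R_{\mathbf A}$ iff for all $a,b$ ($a\to b\in P$, $a\in Q$ imply $b\in Q$); $(P,Q)\in S_{\mathbf A}$ iff for all $a,b$ ($a\in Q$, $b\notin Q$ imply $a\leftarrow b\in P$); $T(\mathbf A)$ is the Boolean algebra of $\tau_{\mathbf A}$-clopen subsets of $X(\mathbf A)$ with $G_{\mathbf A}(U)=\{P\colon R_{\mathbf A}(P)\subseteq U\}$, $H_{\mathbf A}(U)=\{P\colon S_{\mathbf A}(P)\subseteq U\}$. A variety $\mathcal N$ of tense algebras is a tense companion of a variety $\mathcal K$ of WHB-algebras if $T(\mathbf A)\in\mathcal N$ for all $\mathbf A\in\mathcal K$ and $M(\mathbf B)\in\mathcal K$ for all $\mathbf B\in\mathcal N$. A variety $\mathcal V$ has the amalgamation property if for all $\mathbf A,\mathbf B,\mathbf C\in\mathcal V$ and injective homomorphisms $i\colon\mathbf A\to\mathbf B$, $j\colon\mathbf A\to\mathbf C$ there are $\mathbf D\in\mathcal V$ and injective homomorphisms $h\colon\mathbf B\to\mathbf D$, $k\colon\mathbf C\to\mathbf D$ with $hi=kj$. *)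

(* Defs.v *)
From Stdlib Require Import List ClassicalEpsilon.
Import ListNotations.

Record WSig := {
  wcar :> Type;
  wmeet : wcar -> wcar -> wcar;
  wjoin : wcar -> wcar -> wcar;
  wimp : wcar -> wcar -> wcar;
  wcoimp : wcar -> wcar -> wcar;
  wzero : wcar;
  wone : wcar }.

Record TSig := {
  tcar :> Type;
  tmeet : tcar -> tcar -> tcar;
  tjoin : tcar -> tcar -> tcar;
  tneg : tcar -> tcar;
  tzero : tcar;
  tone : tcar;
  tG : tcar -> tcar;
  tH : tcar -> tcar }.

Definition is_bdl {T : Type} (meet join : T -> T -> T) (zero one : T) : Prop :=
  (forall a b c, meet a (meet b c) = meet (meet a b) c) /\
  (forall a b c, join a (join b c) = join (join a b) c) /\
  (forall a b, meet a b = meet b a) /\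
  (forall a b, join a b = join b a) /\
  (forall a b, meet a (join a b) = a) /\
  (forall a b, join a (meet a b) = a) /\
  (forall a b c, meet a (join b c) = join (meet a b) (meet a c)) /\
  (forall a, meet a one = a) /\
  (forall a, join a zero = a).

Definition wle (A : WSig) (a b : A) : Prop := wmeet A a b = a.

Definition is_WHB (A : WSig) : Prop :=
  is_bdl (wmeet A) (wjoin A) (wzero A) (wone A) /\
  (forall a, wimp A a a = wone A) /\
  (forall a b c, wimp A a (wmeet A b c) = wmeet A (wimp A a b) (wimp A a c)) /\
  (forall a b c, wimp A (wjoin A a b) c = wmeet A (wimp A a c) (wimp A b c)) /\
  (forall a b c, wle A (wmeet A (wimp A a b) (wimp A b c)) (wimp A a c)) /\
  (forall a, wcoimp A a a = wzero A) /\
  (forall a b c, wcoimp A (wjoin A a b) c = wjoin A (wcoimp A a c) (wcoimp A b c)) /\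
  (forall a b c, wcoimp A a (wmeet A b c) = wjoin A (wcoimp A a b) (wcoimp A a c)) /\
  (forall a b c, wle A (wcoimp A a c) (wjoin A (wcoimp A a b) (wcoimp A b c))) /\
  (forall a b, wle A (wmeet A a (wcoimp A (wimp A a b) (wzero A))) b) /\
  (forall a b, wle A a (wjoin A b (wimp A (wone A) (wcoimp A a b)))).

Definition tle (B : TSig) (a b : B) : Prop := tmeet B a b = a.
Definition tP (B : TSig) (x : B) : B := tneg B (tH B (tneg B x)).
Definition tF (B : TSig) (x : B) : B := tneg B (tG B (tneg B x)).

Definition is_tense (B : TSig) : Prop :=
  is_bdl (tmeet B) (tjoin B) (tzero B) (tone B) /\
  (forall a, tmeet B a (tneg B a) = tzero B) /\
  (forall a, tjoin B a (tneg B a) = tone B) /\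
  (forall x y, tle B (tP B x) y <-> tle B x (tG B y)) /\
  (forall x y, tle B (tF B x) y <-> tle B x (tH B y)).

Inductive wterm :=
  | wvar (n : nat)
  | wmeetT (t u : wterm) | wjoinT (t u : wterm)
  | wimpT (t u : wterm) | wcoimpT (t u : wterm)
  | wzeroT | woneT.

Fixpoint weval (A : WSig) (v : nat -> A) (t : wterm) : A :=
  match t with
  | wvar n => v n
  | wmeetT t u => wmeet A (weval A v t) (weval A v u)
  | wjoinT t u => wjoin A (weval A v t) (weval A v u)
  | wimpT t u => wimp A (weval A v t) (weval A v u)
  | wcoimpT t u => wcoimp A (weval A v t) (weval A v u)
  | wzeroT => wzero A
  | woneT => wone A
  end.

Inductive tterm :=
  | tvar (n : nat)
  | tmeetT (t u : tterm) | tjoinT (t u : tterm) | tnegT (t : tterm)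
  | tzeroT | toneT | tGT (t : tterm) | tHT (t : tterm).

Fixpoint teval (B : TSig) (v : nat -> B) (t : tterm) : B :=
  match t with
  | tvar n => v n
  | tmeetT t u => tmeet B (teval B v t) (teval B v u)
  | tjoinT t u => tjoin B (teval B v t) (teval B v u)
  | tnegT t => tneg B (teval B v t)
  | tzeroT => tzero B
  | toneT => tone B
  | tGT t => tG B (teval B v t)
  | tHT t => tH B (teval B v t)
  end.

Definition whb_variety (K : WSig -> Prop) : Prop :=
  exists E : wterm -> wterm -> Prop,
    forall A : WSig,
      K A <-> (is_WHB A /\
               forall t u, E t u -> forall v : nat -> A, weval A v t = weval A v u).

Definition tense_variety (N : TSig -> Prop) : Prop :=
  exists E : tterm -> tterm -> Prop,
    forall B : TSig,
      N B <-> (is_tense B /\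
               forall t u, E t u -> forall v : nat -> B, teval B v t = teval B v u).

Definition M (B : TSig) : WSig := {|
  wcar := B;
  wmeet := tmeet B;
  wjoin := tjoin B;
  wimp := fun x y => tG B (tjoin B (tneg B x) y);
  wcoimp := fun x y => tP B (tmeet B x (tneg B y));
  wzero := tzero B;
  wone := tone B |}.

Definition prime_filter (A : WSig) (F : A -> Prop) : Prop :=
  F (wone A) /\ ~ F (wzero A) /\
  (forall a b, F a -> F b -> F (wmeet A a b)) /\
  (forall a b, F a -> wle A a b -> F b) /\
  (forall a b, F (wjoin A a b) -> F a \/ F b).

Definition X (A : WSig) : Type := { F : A -> Prop | prime_filter A F }.

Definition sigma_ (A : WSig) (a : A) : X A -> Prop := fun P => proj1_sig P a.

Definition subb (A : WSig) (s : bool * A) : X A -> Prop :=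
  fun P => if fst s then sigma_ A (snd s) P else ~ sigma_ A (snd s) P.

Definition openA (A : WSig) (U : X A -> Prop) : Prop :=
  forall P, U P -> exists l : list (bool * A),
    (forall s, In s l -> subb A s P) /\
    (forall Q, (forall s, In s l -> subb A s Q) -> U Q).

Definition clopenA (A : WSig) (U : X A -> Prop) : Prop :=
  openA A U /\ openA A (fun P => ~ U P).

Definition RA (A : WSig) (P Q : X A) : Prop :=
  forall a b, proj1_sig P (wimp A a b) -> proj1_sig Q a -> proj1_sig Q b.

Definition SA (A : WSig) (P Q : X A) : Prop :=
  forall a b, proj1_sig Q a -> ~ proj1_sig Q b -> proj1_sig P (wcoimp A a b).

Definition Clop (A : WSig) : Type := { U : X A -> Prop | clopenA A U }.

Lemma clopen_empty (A : WSig) : clopenA A (fun _ => False).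
Proof.
  split.
  - intros P [].
  - intros P _. exists nil. split.
    + intros s [].
    + intros Q _ [].
Qed.

(* All
   operations below are applied only to sets that are in fact clopen
   (closure of clopens under the Boolean operations and under G_A, H_A),
   so the fallback value is never used in the intended algebra. *)
Definition mk_clop (A : WSig) (S : X A -> Prop) : Clop A :=
  match excluded_middle_informative (clopenA A S) with
  | left h => exist _ S h
  | right _ => exist _ (fun _ => False) (clopen_empty A)
  end.

Definition GA (A : WSig) (U : X A -> Prop) : X A -> Prop :=
  fun P => forall Q, RA A P Q -> U Q.
Definition HA (A : WSig) (U : X A -> Prop) : X A -> Prop :=
  fun P => forall Q, SA A P Q -> U Q.

Definition T (A : WSig) : TSig := {|
  tcar := Clop A;
  tmeet := fun U V => mk_clop A (fun P => proj1_sig U P /\ proj1_sig V P);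
  tjoin := fun U V => mk_clop A (fun P => proj1_sig U P \/ proj1_sig V P);
  tneg := fun U => mk_clop A (fun P => ~ proj1_sig U P);
  tzero := mk_clop A (fun _ => False);
  tone := mk_clop A (fun _ => True);
  tG := fun U => mk_clop A (GA A (proj1_sig U));
  tH := fun U => mk_clop A (HA A (proj1_sig U)) |}.

Definition tense_companion (K : WSig -> Prop) (N : TSig -> Prop) : Prop :=
  (forall A, K A -> N (T A)) /\ (forall B, N B -> K (M B)).

Definition whom (A B : WSig) (f : A -> B) : Prop :=
  (forall a b, f (wmeet A a b) = wmeet B (f a) (f b)) /\
  (forall a b, f (wjoin A a b) = wjoin B (f a) (f b)) /\
  (forall a b, f (wimp A a b) = wimp B (f a) (f b)) /\
  (forall a b, f (wcoimp A a b) = wcoimp B (f a) (f b)) /\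
  f (wzero A) = wzero B /\ f (wone A) = wone B.

Definition thom (A B : TSig) (f : A -> B) : Prop :=
  (forall a b, f (tmeet A a b) = tmeet B (f a) (f b)) /\
  (forall a b, f (tjoin A a b) = tjoin B (f a) (f b)) /\
  (forall a, f (tneg A a) = tneg B (f a)) /\
  f (tzero A) = tzero B /\ f (tone A) = tone B /\
  (forall a, f (tG A a) = tG B (f a)) /\
  (forall a, f (tH A a) = tH B (f a)).

Definition injective {X Y : Type} (f : X -> Y) : Prop :=
  forall x y, f x = f y -> x = y.

Definition w_amalgamation (V : WSig -> Prop) : Prop :=
  forall (A B C : WSig) (i : A -> B) (j : A -> C),
    V A -> V B -> V C ->
    whom A B i -> injective i -> whom A C j -> injective j ->
    exists (D : WSig) (h : B -> D) (k : C -> D),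
      V D /\ whom B D h /\ injective h /\ whom C D k /\ injective k /\
      (forall a, h (i a) = k (j a)).

Definition t_amalgamation (V : TSig -> Prop) : Prop :=
  forall (A B C : TSig) (i : A -> B) (j : A -> C),
    V A -> V B -> V C ->
    thom A B i -> injective i -> thom A C j -> injective j ->
    exists (D : TSig) (h : B -> D) (k : C -> D),
      V D /\ thom B D h /\ injective h /\ thom C D k /\ injective k /\
      (forall a, h (i a) = k (j a)).

(* Main.v *)
Require Import Defs.
From Stdlib Require Import List Classical ClassicalEpsilon FunctionalExtensionality PropExtensionality ProofIrrelevance.
From mathcomp Require classical_sets boolp.
From Corelib Require ssrbool.
Import ListNotations.

Definition incl_ {T} (P Q : T -> Prop) := forall x, P x -> Q x.

Lemma zorn_pred {T : Type} (Phi : (T -> Prop) -> Prop) (X0 : T -> Prop) :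
  Phi X0 ->
  (forall C : (T -> Prop) -> Prop,
     (forall N, C N -> Phi N /\ incl_ X0 N) -> (exists N, C N) ->
     (forall N1 N2, C N1 -> C N2 -> incl_ N1 N2 \/ incl_ N2 N1) ->
     Phi (fun x => exists N, C N /\ N x)) ->
  exists M0, Phi M0 /\ incl_ X0 M0 /\ forall N, Phi N -> incl_ M0 N -> incl_ N M0.
Proof.
  intros H0 Hch.
  set (S := {N : T -> Prop | Phi N /\ incl_ X0 N}).
  assert (t0 : S) by (exists X0; split; [exact H0| intros x h; exact h]).
  destruct (@classical_sets.ZL_preorder S t0
     (fun a b => boolp.asbool (incl_ (proj1_sig a) (proj1_sig b)))) as [m Hm].
  - intros a. apply (ssrbool.introT (boolp.asboolP _)). intros x h; exact h.
  - intros r s t H1 H2. apply (ssrbool.introT (boolp.asboolP _)).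
    apply (ssrbool.elimT (boolp.asboolP _)) in H1. apply (ssrbool.elimT (boolp.asboolP _)) in H2.
    intros x h; auto.
  - intros Al Htot.
    destruct (classic (exists a, Al a)) as [[a Ha]|Hne].
    + assert (HC : Phi (fun x => exists N, (exists s : S, Al s /\ proj1_sig s = N) /\ N x)).
      { apply Hch.
        - intros N [[s Hs] [_ <-]]. exact Hs.
        - exists (proj1_sig a). exists a; auto.
        - intros N1 N2 [s1 [h1 <-]] [s2 [h2 <-]].
          destruct (Htot s1 s2 h1 h2) as [h|h]; [left|right];
          apply (ssrbool.elimT (boolp.asboolP _)) in h; auto. }
      unshelve eexists (exist (fun N => Phi N /\ incl_ X0 N) _ (conj HC _)).
      { intros x hx. exists (proj1_sig a). split; [exists a; auto| ].
        exact (proj2 (proj2_sig a) x hx). }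
      intros s Hs. apply (ssrbool.introT (boolp.asboolP _)). intros x hx. simpl.
      exists (proj1_sig s). split; [exists s; auto | exact hx].
    + exists t0. intros s Hs. exfalso. apply Hne; eauto.
  - exists (proj1_sig m). destruct m as [m [h1 h2]]. simpl. split; [exact h1|split; [exact h2|]].
    intros N HN HmN.
    assert (HX : incl_ X0 N) by (intros x hx; apply HmN, h2, hx).
    specialize (Hm (exist _ N (conj HN HX))).
    simpl in Hm.
    assert (Hr := Hm (ssrbool.introT (boolp.asboolP _) HmN)).
    apply (ssrbool.elimT (boolp.asboolP _)) in Hr. auto.
Qed.

Record BDL := { bc :> Type; bm : bc -> bc -> bc; bj : bc -> bc -> bc; bz : bc; bo : bc;
  bax : is_bdl bm bj bz bo }.

Definition ble (L : BDL) (a b : L) := bm L a b = a.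

Lemma b_massoc (L : BDL) a b c : bm L a (bm L b c) = bm L (bm L a b) c.
Proof. apply (bax L). Qed.
Lemma b_jassoc (L : BDL) a b c : bj L a (bj L b c) = bj L (bj L a b) c.
Proof. apply (bax L). Qed.
Lemma b_mcomm (L : BDL) a b : bm L a b = bm L b a.
Proof. apply (bax L). Qed.
Lemma b_jcomm (L : BDL) a b : bj L a b = bj L b a.
Proof. apply (bax L). Qed.
Lemma b_mabs (L : BDL) a b : bm L a (bj L a b) = a.
Proof. apply (bax L). Qed.
Lemma b_jabs (L : BDL) a b : bj L a (bm L a b) = a.
Proof. apply (bax L). Qed.
Lemma b_distr (L : BDL) a b c : bm L a (bj L b c) = bj L (bm L a b) (bm L a c).
Proof. apply (bax L). Qed.
Lemma b_mo (L : BDL) a : bm L a (bo L) = a.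
Proof. apply (bax L). Qed.
Lemma b_jz (L : BDL) a : bj L a (bz L) = a.
Proof. apply (bax L). Qed.

Lemma b_midem (L : BDL) a : bm L a a = a.
Proof. rewrite <- (b_jabs L a a) at 2. apply b_mabs. Qed.
Lemma b_jidem (L : BDL) a : bj L a a = a.
Proof. rewrite <- (b_mabs L a a) at 2. apply b_jabs. Qed.
Lemma b_mz (L : BDL) a : bm L a (bz L) = bz L.
Proof. rewrite b_mcomm. rewrite <- (b_jz L a). rewrite (b_jcomm L a). apply b_mabs. Qed.
Lemma b_jo (L : BDL) a : bj L a (bo L) = bo L.
Proof. rewrite b_jcomm. rewrite <- (b_mo L a). rewrite (b_mcomm L a). apply b_jabs. Qed.
Lemma b_distr2 (L : BDL) a b c : bj L a (bm L b c) = bm L (bj L a b) (bj L a c).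
Proof.
  rewrite (b_distr L (bj L a b) a c).
  rewrite (b_mcomm L (bj L a b) a), b_mabs.
  rewrite (b_mcomm L (bj L a b) c), b_distr.
  rewrite b_jassoc. rewrite (b_mcomm L c a), b_jabs. rewrite (b_mcomm L c b). reflexivity.
Qed.
Lemma b_le_join (L : BDL) a b : ble L a b <-> bj L a b = b.
Proof.
  unfold ble; split; intro H.
  - rewrite <- H. rewrite b_jcomm, b_mcomm. apply b_jabs.
  - rewrite <- H. apply b_mabs.
Qed.

Definition dualB (L : BDL) : BDL.
Proof.
  refine {| bc := L; bm := bj L; bj := bm L; bz := bo L; bo := bz L |}.
  repeat split; intros.
  - apply b_jassoc. - apply b_massoc. - apply b_jcomm. - apply b_mcomm.
  - apply b_jabs. - apply b_mabs. - apply b_distr2. - apply b_jz. - apply b_mo.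
Defined.

Lemma ble_refl (L : BDL) a : ble L a a.
Proof. apply b_midem. Qed.
Lemma ble_trans (L : BDL) a b c : ble L a b -> ble L b c -> ble L a c.
Proof. unfold ble; intros H1 H2. rewrite <- H1, <- b_massoc, H2. reflexivity. Qed.
Lemma ble_antisym (L : BDL) a b : ble L a b -> ble L b a -> a = b.
Proof. unfold ble; intros H1 H2. rewrite <- H1, b_mcomm. exact H2. Qed.
Lemma ble_ml (L : BDL) a b : ble L (bm L a b) a.
Proof. unfold ble. rewrite (b_mcomm L (bm L a b) a), b_massoc, b_midem. reflexivity. Qed.
Lemma ble_mr (L : BDL) a b : ble L (bm L a b) b.
Proof. unfold ble. rewrite <- b_massoc, b_midem. reflexivity. Qed.
Lemma ble_mI (L : BDL) x a b : ble L x a -> ble L x b -> ble L x (bm L a b).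
Proof. unfold ble; intros H1 H2. rewrite b_massoc, H1, H2. reflexivity. Qed.
Lemma ble_jl (L : BDL) a b : ble L a (bj L a b).
Proof. apply b_mabs. Qed.
Lemma ble_jr (L : BDL) a b : ble L b (bj L a b).
Proof. rewrite b_jcomm. apply b_mabs. Qed.
Lemma ble_jE (L : BDL) a b x : ble L a x -> ble L b x -> ble L (bj L a b) x.
Proof. intros H1 H2. apply b_le_join in H1. apply b_le_join in H2. apply b_le_join.
  rewrite <- b_jassoc, H2, H1. reflexivity. Qed.
Lemma ble_mono (L : BDL) a b c d : ble L a c -> ble L b d -> ble L (bm L a b) (bm L c d).
Proof. intros. apply ble_mI; [apply ble_trans with a|apply ble_trans with b]; auto using ble_ml, ble_mr. Qed.
Lemma ble_jmono (L : BDL) a b c d : ble L a c -> ble L b d -> ble L (bj L a b) (bj L c d).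
Proof. intros. apply ble_jE; [apply ble_trans with c|apply ble_trans with d]; auto using ble_jl, ble_jr. Qed.
Lemma ble_o (L : BDL) a : ble L a (bo L).
Proof. apply b_mo. Qed.
Lemma ble_z (L : BDL) a : ble L (bz L) a.
Proof. unfold ble. rewrite b_mcomm. apply b_mz. Qed.
Lemma ble_dual (L : BDL) a b : ble (dualB L) a b <-> ble L b a.
Proof. unfold ble; simpl. rewrite b_jcomm. symmetry. apply b_le_join. Qed.

Definition gpf (L : BDL) (Q : L -> Prop) : Prop :=
  Q (bo L) /\ ~ Q (bz L) /\
  (forall a b, Q a -> Q b -> Q (bm L a b)) /\
  (forall a b, Q a -> ble L a b -> Q b) /\
  (forall a b, Q (bj L a b) -> Q a \/ Q b).

Lemma max_filter (L : BDL) (Fl Il : L -> Prop) :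
  (exists x, Fl x) -> (forall a b, Fl a -> ble L a b -> Fl b) -> (forall a b, Fl a -> Fl b -> Fl (bm L a b)) ->
  (exists x, Il x) -> (forall a b, Il b -> ble L a b -> Il a) -> (forall a b, Il a -> Il b -> Il (bj L a b)) ->
  (forall x, Fl x -> Il x -> False) ->
  exists Q, gpf L Q /\ (forall x, Fl x -> Q x) /\ (forall x, Q x -> Il x -> False) /\
    (forall y, ~ Q y -> exists q, Q q /\ Il (bm L q y)).
Proof.
  intros [f0 Hf0] Fup Fm [i0 Hi0] Idn Ij Hdis.
  set (Phi := fun G : L -> Prop => (forall a b, G a -> ble L a b -> G b) /\
       (forall a b, G a -> G b -> G (bm L a b)) /\ (forall x, G x -> Il x -> False)).
  assert (P1 : Phi Fl) by (split; [|split]; assumption).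
  assert (P2 : forall C : (L -> Prop) -> Prop,
     (forall N, C N -> Phi N /\ incl_ Fl N) -> (exists N, C N) ->
     (forall N1 N2, C N1 -> C N2 -> incl_ N1 N2 \/ incl_ N2 N1) ->
     Phi (fun x => exists N, C N /\ N x)).
  { intros C HC [N0 HN0] Htot. split; [|split].
    + intros a b [N [HN Ha]] Hab. exists N. split; auto.
      destruct (HC N HN) as [[u _] _]. apply u with a; auto.
    + intros a b [N1 [HN1 Ha]] [N2 [HN2 Hb]].
      destruct (Htot N1 N2 HN1 HN2) as [h|h].
      * exists N2. split; auto. destruct (HC N2 HN2) as [[_ [u _]] _]. apply u; auto.
      * exists N1. split; auto. destruct (HC N1 HN1) as [[_ [u _]] _]. apply u; auto.
    + intros x [N [HN Hx]] Hi. destruct (HC N HN) as [[_ [_ u]] _]. apply u with x; auto. }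
  destruct (zorn_pred Phi Fl P1 P2) as [Q [[Qup [Qm Qdis]] [HFQ Qmax]]].
  assert (Hmx : forall y, ~ Q y -> exists q, Q q /\ Il (bm L q y)).
    { intros y Hy. apply NNPP. intro Hne.
      set (G := fun w => exists q, Q q /\ ble L (bm L q y) w).
      assert (PG : Phi G).
      { split; [|split].
        - intros a b [q [Hq H1]] H2. exists q. split; auto. eapply ble_trans; eauto.
        - intros a b [q1 [Hq1 H1]] [q2 [Hq2 H2]]. exists (bm L q1 q2). split; auto.
          apply ble_mI.
          + eapply ble_trans; [|exact H1]. apply ble_mono; [apply ble_ml|apply ble_refl].
          + eapply ble_trans; [|exact H2]. apply ble_mono; [apply ble_mr|apply ble_refl].
        - intros x [q [Hq H1]] Hx. apply Hne. exists q. split; auto. eapply Idn; eauto. }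
      assert (QG : incl_ Q G).
      { intros q Hq. exists q. split; auto. apply ble_ml. }
      apply Hy. apply (Qmax G PG QG). exists f0. split; auto. apply ble_mr. }
    exists Q. split; [|split; [exact HFQ|split; [exact Qdis|exact Hmx]]].
    split; [|split; [|split; [|split]]].
    + apply Qup with f0; auto. apply ble_o.
    + intro Hz. apply (Qdis (bz L)); auto. apply Idn with i0; auto. apply ble_z.
    + exact Qm.
    + exact Qup.
    + intros a b Hab. apply NNPP. intro Hn.
      destruct (Hmx a) as [q1 [Hq1 I1]]; [intro; apply Hn; auto|].
      destruct (Hmx b) as [q2 [Hq2 I2]]; [intro; apply Hn; auto|].
      apply (Qdis (bm L (bm L q1 q2) (bj L a b))).
      * apply Qm; auto.
      * rewrite b_distr. apply Ij.
        -- apply Idn with (bm L q1 a); auto. apply ble_mono; [apply ble_ml|apply ble_refl].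
        -- apply Idn with (bm L q2 b); auto. apply ble_mono; [apply ble_mr|apply ble_refl].
Qed.

(* dual version: maximal ideal disjoint from a filter; complement is a prime filter *)
Lemma max_ideal (L : BDL) (Fl Il : L -> Prop) :
  (exists x, Fl x) -> (forall a b, Fl a -> ble L a b -> Fl b) -> (forall a b, Fl a -> Fl b -> Fl (bm L a b)) ->
  (exists x, Il x) -> (forall a b, Il b -> ble L a b -> Il a) -> (forall a b, Il a -> Il b -> Il (bj L a b)) ->
  (forall x, Fl x -> Il x -> False) ->
  exists Q, gpf L Q /\ (forall x, Fl x -> Q x) /\ (forall x, Q x -> Il x -> False) /\
    (forall y, Q y -> exists j, ~ Q j /\ Fl (bj L y j)).
Proof.
  intros HF Fup Fm HI Idn Ij Hdis.
  assert (S1 : forall a b, Il a -> ble (dualB L) a b -> Il b).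
  { intros a b Ha Hab. apply Idn with a; auto. apply ble_dual; auto. }
  assert (S2 : forall a b, Fl b -> ble (dualB L) a b -> Fl a).
  { intros a b Hb Hab. apply Fup with b; auto. apply ble_dual in Hab; auto. }
  assert (S3 : forall x, Il x -> Fl x -> False) by eauto.
  destruct (max_filter (dualB L) Il Fl HI S1 Ij HF S2 Fm S3) as [J [[J1 [J2 [J3 [J4 J5]]]] [HIJ [HJF Jmax]]]].
  exists (fun x => ~ J x). split; [|split; [|split]].
    + split; [|split; [|split; [|split]]].
      * exact J2.
      * intro h; apply h, J1.
      * intros a b Ha Hb Hab. destruct (J5 a b Hab); auto.
      * intros a b Ha Hab Hb. apply Ha. apply J4 with b; auto. apply ble_dual. auto.
      * intros a b Hab. apply NNPP. intro Hn. apply Hab. apply J3; apply NNPP; intro; apply Hn; auto.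
    + intros x Hx HJ. eauto.
    + intros x Hx Hi. apply Hx. auto.
    + intros y Hy. destruct (Jmax y Hy) as [q [Hq Hf]]. exists q. split; [tauto|].
      simpl in Hf. rewrite b_jcomm. exact Hf.
Qed.

Definition LW (A : WSig) (H : is_WHB A) : BDL :=
  {| bc := A; bm := wmeet A; bj := wjoin A; bz := wzero A; bo := wone A; bax := proj1 H |}.

Definition Rrel (A : WSig) (P Q : A -> Prop) := forall a b, P (wimp A a b) -> Q a -> Q b.
Definition Srel (A : WSig) (P Q : A -> Prop) := forall a b, Q a -> ~ Q b -> P (wcoimp A a b).


Lemma ax_ii A (H : is_WHB A) a : wimp A a a = wone A.
Proof. destruct H as [_ [h _]]; apply h. Qed.
Lemma ax_im A (H : is_WHB A) a b c : wimp A a (wmeet A b c) = wmeet A (wimp A a b) (wimp A a c).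
Proof. destruct H as [_ [_ [h _]]]; apply h. Qed.
Lemma ax_ij A (H : is_WHB A) a b c : wimp A (wjoin A a b) c = wmeet A (wimp A a c) (wimp A b c).
Proof. destruct H as [_ [_ [_ [h _]]]]; apply h. Qed.
Lemma ax_cc A (H : is_WHB A) a : wcoimp A a a = wzero A.
Proof. destruct H as [_ [_ [_ [_ [_ [h _]]]]]]; apply h. Qed.
Lemma ax_cj A (H : is_WHB A) a b c : wcoimp A (wjoin A a b) c = wjoin A (wcoimp A a c) (wcoimp A b c).
Proof. destruct H as [_ [_ [_ [_ [_ [_ [h _]]]]]]]; apply h. Qed.
Lemma ax_cm A (H : is_WHB A) a b c : wcoimp A a (wmeet A b c) = wjoin A (wcoimp A a b) (wcoimp A a c).
Proof. destruct H as [_ [_ [_ [_ [_ [_ [_ [h _]]]]]]]]; apply h. Qed.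

Lemma imp_anti1 A (H : is_WHB A) a a' b : ble (LW A H) a a' -> ble (LW A H) (wimp A a' b) (wimp A a b).
Proof.
  intro h. apply b_le_join in h. simpl in h.
  assert (E : wimp A a' b = wmeet A (wimp A a b) (wimp A a' b)).
  { rewrite <- h at 1. apply (ax_ij A H). }
  rewrite E. apply (ble_ml (LW A H)).
Qed.
Lemma imp_mono2 A (H : is_WHB A) a b b' : ble (LW A H) b b' -> ble (LW A H) (wimp A a b) (wimp A a b').
Proof.
  intro h. unfold ble in h; simpl in h.
  assert (E : wimp A a b = wmeet A (wimp A a b) (wimp A a b')).
  { rewrite <- h at 1. apply (ax_im A H). }
  rewrite E. apply (ble_mr (LW A H)).
Qed.
Lemma imp_one A (H : is_WHB A) a b : ble (LW A H) a b -> wimp A a b = wone A.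
Proof.
  intro h. apply (ble_antisym (LW A H)). apply (ble_o (LW A H)).
  replace (wone A) with (wimp A b b) by (apply (ax_ii A H)).
  apply imp_anti1; auto.
Qed.
Lemma imp_trans A (H : is_WHB A) a b c : ble (LW A H) (wmeet A (wimp A a b) (wimp A b c)) (wimp A a c).
Proof. assert (h := H). destruct h as [_ [_ [_ [_ [Hit _]]]]]. apply Hit. Qed.
Lemma coimp_mono1 A (H : is_WHB A) a a' b : ble (LW A H) a a' -> ble (LW A H) (wcoimp A a b) (wcoimp A a' b).
Proof.
  intro h. apply b_le_join in h. simpl in h.
  assert (E : wcoimp A a' b = wjoin A (wcoimp A a b) (wcoimp A a' b)).
  { rewrite <- h at 1. apply (ax_cj A H). }
  rewrite E. apply (ble_jl (LW A H)).
Qed.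
Lemma coimp_anti2 A (H : is_WHB A) a b b' : ble (LW A H) b b' -> ble (LW A H) (wcoimp A a b') (wcoimp A a b).
Proof.
  intro h. unfold ble in h; simpl in h.
  assert (E : wcoimp A a b = wjoin A (wcoimp A a b) (wcoimp A a b')).
  { rewrite <- h at 1. apply (ax_cm A H). }
  rewrite E. apply (ble_jr (LW A H)).
Qed.
Lemma coimp_zero A (H : is_WHB A) a b : ble (LW A H) a b -> wcoimp A a b = wzero A.
Proof.
  intro h. apply (ble_antisym (LW A H)); [|apply (ble_z (LW A H))].
  replace (wzero A) with (wcoimp A a a) by (apply (ax_cc A H)).
  apply coimp_anti2; auto.
Qed.
Lemma coimp_trans A (H : is_WHB A) a b c : ble (LW A H) (wcoimp A a c) (wjoin A (wcoimp A a b) (wcoimp A b c)).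
Proof. assert (h := H). destruct h as [_ [_ [_ [_ [_ [_ [_ [_ [Hct _]]]]]]]]]. apply Hct. Qed.

Lemma R_close A (H : is_WHB A) (P Q Il : A -> Prop) :
  gpf (LW A H) P -> gpf (LW A H) Q ->
  (forall x, Q x -> Il x -> False) ->
  (forall y, ~ Q y -> exists q, Q q /\ Il (wmeet A q y)) ->
  (forall x y, P (wimp A x y) -> Il y -> Il x) ->
  Rrel A P Q.
Proof.
  intros HP HQ Hdis Hmax Hcl x y Hxy Hx. apply NNPP. intro Hy.
  destruct (Hmax y Hy) as [q [Hq Hi]].
  destruct HP as [_ [_ [Pm [Pu _]]]]. destruct HQ as [_ [_ [Qm _]]].
  apply (Hdis (wmeet A q x)); [apply Qm; auto|].
  apply Hcl with (wmeet A q y); auto.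
  apply Pu with (wimp A x y); auto.
  rewrite (ax_im A H).
  rewrite (imp_one A H (wmeet A q x) q) by (apply (ble_ml (LW A H))).
  change (ble (LW A H) (wimp A x y) (bm (LW A H) (bo (LW A H)) (wimp A (wmeet A q x) y))).
  rewrite b_mcomm, b_mo. apply imp_anti1. apply (ble_mr (LW A H)).
Qed.

Lemma S_close A (H : is_WHB A) (P Q Fl : A -> Prop) :
  gpf (LW A H) P -> gpf (LW A H) Q ->
  (forall x, Fl x -> Q x) ->
  (forall y, Q y -> exists j, ~ Q j /\ Fl (wjoin A y j)) ->
  (forall w w', Fl w -> ~ Fl w' -> P (wcoimp A w w')) ->
  Srel A P Q.
Proof.
  intros HP HQ HFQ Hmax Hcl x y Hx Hy.
  destruct (Hmax x Hx) as [j [Hj Hf]].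
  assert (Hyj : ~ Q (wjoin A y j)).
  { intro h. destruct HQ as [_ [_ [_ [_ Qp]]]]. destruct (Qp _ _ h); auto. }
  assert (Hw := Hcl _ _ Hf (fun h => Hyj (HFQ _ h))).
  destruct HP as [_ [Pz [_ [Pu Pp]]]].
  rewrite (ax_cj A H) in Hw. destruct (Pp _ _ Hw) as [h|h].
  - apply Pu with (wcoimp A x (wjoin A y j)); auto. apply coimp_anti2. apply (ble_jl (LW A H)).
  - exfalso. apply Pz. rewrite (coimp_zero A H j (wjoin A y j)) in h by (apply (ble_jr (LW A H))). exact h.
Qed.

Lemma gpf_up A (H : is_WHB A) P a b : gpf (LW A H) P -> P a -> ble (LW A H) a b -> P b.
Proof. intros [_ [_ [_ [u _]]]]; eauto. Qed.

Lemma imp_witness A (H : is_WHB A) (P : A -> Prop) a b :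
  gpf (LW A H) P -> ~ P (wimp A a b) ->
  exists Q, gpf (LW A H) Q /\ Rrel A P Q /\ Q a /\ ~ Q b.
Proof.
  intros HP Hn. set (L := LW A H).
  destruct HP as [P1 [P0 [Pm [Pu Pp]]]] eqn:EP.
  destruct (max_filter L (fun x => ble L a x) (fun x => P (wimp A x b))) as [Q [HQ [HFQ [Hdis Hmax]]]].
  - exists a. apply ble_refl.
  - intros x y h1 h2. eapply ble_trans; eauto.
  - intros x y h1 h2. apply ble_mI; auto.
  - exists b. rewrite (imp_one A H b b) by apply ble_refl. exact P1.
  - intros x y Hy Hxy. apply Pu with (wimp A y b); auto. apply imp_anti1; auto.
  - intros x y Hx Hy. simpl. rewrite (ax_ij A H). apply Pm; auto.
  - intros x Hx Hi. apply Hn. apply Pu with (wimp A x b); auto. apply imp_anti1; auto.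
  - exists Q. split; [exact HQ|split; [|split]].
    + apply (R_close A H P Q (fun x => P (wimp A x b))); auto.
      intros x y Hxy Hyb. apply Pu with (wmeet A (wimp A x y) (wimp A y b)); [apply Pm; auto|].
      apply imp_trans.
    + apply HFQ. apply ble_refl.
    + intro Hb. apply (Hdis b Hb). simpl. rewrite (imp_one A H b b) by apply ble_refl. exact P1.
Qed.

Lemma coimp_witness A (H : is_WHB A) (P : A -> Prop) a b :
  gpf (LW A H) P -> P (wcoimp A a b) ->
  exists Q, gpf (LW A H) Q /\ Srel A P Q /\ Q a /\ ~ Q b.
Proof.
  intros HP Hab. set (L := LW A H).
  destruct HP as [P1 [P0 [Pm [Pu Pp]]]] eqn:EP.
  destruct (max_ideal L (fun y => ~ P (wcoimp A a y)) (fun x => ble L x b)) as [Q [HQ [HFQ [Hdis Hmax]]]].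
  - exists a. rewrite (coimp_zero A H a a) by apply ble_refl. exact P0.
  - intros x y Hx Hxy Hy. apply Hx. apply Pu with (wcoimp A a y); auto. apply coimp_anti2; auto.
  - intros x y Hx Hy Hxy. simpl in Hxy.
    rewrite (ax_cm A H) in Hxy. destruct (Pp _ _ Hxy); auto.
  - exists b. apply ble_refl.
  - intros x y Hy Hxy. eapply ble_trans; eauto.
  - intros x y Hx Hy. apply ble_jE; auto.
  - intros x Hx Hi. apply Hx. apply Pu with (wcoimp A a b); auto. apply coimp_anti2; auto.
  - exists Q. split; [exact HQ|split; [|split]].
    + apply (S_close A H P Q (fun y => ~ P (wcoimp A a y))); auto.
      intros w w' Hw Hw'. apply NNPP in Hw'.
      assert (h := coimp_trans A H a w w').
      assert (h2 := Pu _ _ Hw' h). destruct (Pp _ _ h2); tauto.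
    + apply HFQ. simpl. rewrite (coimp_zero A H a a) by apply ble_refl. exact P0.
    + intro Hb. apply (Hdis b Hb). apply ble_refl.
Qed.

Lemma pft A (H : is_WHB A) a b : ~ ble (LW A H) a b -> exists Q, gpf (LW A H) Q /\ Q a /\ ~ Q b.
Proof.
  intros Hn. set (L := LW A H).
  destruct (max_filter L (fun x => ble L a x) (fun x => ble L x b)) as [Q [HQ [HFQ [Hdis _]]]].
  - exists a. apply ble_refl.
  - intros x y h1 h2. eapply ble_trans; eauto.
  - intros x y h1 h2. apply ble_mI; auto.
  - exists b. apply ble_refl.
  - intros x y Hy Hxy. eapply ble_trans; eauto.
  - intros x y Hx Hy. apply ble_jE; auto.
  - intros x h1 h2. apply Hn. eapply ble_trans; eauto.
  - exists Q. split; auto. split. apply HFQ, ble_refl. intro Hb. apply (Hdis b Hb), ble_refl.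
Qed.

Lemma whom_mono A B (HA : is_WHB A) (HB : is_WHB B) i : whom A B i ->
  forall a b, ble (LW A HA) a b -> ble (LW B HB) (i a) (i b).
Proof. intros [im _] a b h. unfold ble in *; simpl in *. rewrite <- im, h. reflexivity. Qed.

Lemma gpf_pre A B (HA : is_WHB A) (HB : is_WHB B) i : whom A B i ->
  forall P, gpf (LW B HB) P -> gpf (LW A HA) (fun a => P (i a)).
Proof.
  intros Hi P HP. assert (Hm := whom_mono A B HA HB i Hi).
  destruct Hi as [im [ij [_ [_ [iz io]]]]].
  destruct HP as [P1 [P0 [Pm [Pu Pp]]]].
  split; [|split; [|split; [|split]]]; simpl.
  - rewrite io. exact P1.
  - rewrite iz. exact P0.
  - intros a b Ha Hb. rewrite im. apply Pm; auto.
  - intros a b Ha Hab. apply Pu with (i a); auto.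
  - intros a b Hab. rewrite ij in Hab. apply Pp; auto.
Qed.

Lemma back_R A B (HA : is_WHB A) (HB : is_WHB B) i (Hi : whom A B i) (P' : B -> Prop) (Q : A -> Prop) :
  gpf (LW B HB) P' -> gpf (LW A HA) Q -> Rrel A (fun a => P' (i a)) Q ->
  exists Q', gpf (LW B HB) Q' /\ Rrel B P' Q' /\ forall a, Q' (i a) <-> Q a.
Proof.
  intros HP HQ HR. set (L := LW B HB).
  assert (Hmo := whom_mono A B HA HB i Hi).
  destruct Hi as [im [ij [iimp [icoimp [iz io]]]]].
  destruct HP as [P1 [P0 [Pm [Pu Pp]]]] eqn:EP.
  destruct HQ as [Q1 [Q0 [Qm [Qu Qp]]]].
  set (Fl := fun y => exists q, Q q /\ ble L (i q) y).
  set (Il := fun x => exists c, ~ Q c /\ P' (wimp B x (i c))).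
  destruct (max_filter L Fl Il) as [Q' [HQ' [HFQ [Hdis Hmax]]]].
  - exists (i (wone A)). exists (wone A). split; auto. apply ble_refl.
  - intros x y [q [Hq h1]] h2. exists q. split; auto. eapply ble_trans; eauto.
  - intros x y [q1 [Hq1 h1]] [q2 [Hq2 h2]]. exists (wmeet A q1 q2). split; [apply Qm; auto|].
    simpl. rewrite im. apply ble_mono; auto.
  - exists (i (wzero A)). exists (wzero A). split; auto.
    rewrite (ax_ii B HB). exact P1.
  - intros x y [c [Hc h]] Hxy. exists c. split; auto. apply Pu with (wimp B y (i c)); auto.
    apply imp_anti1; auto.
  - intros x y [c1 [Hc1 h1]] [c2 [Hc2 h2]]. exists (wjoin A c1 c2). split.
    + intro h. destruct (Qp _ _ h); auto.
    + simpl. rewrite (ax_ij B HB). apply Pm.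
      * apply Pu with (wimp B x (i c1)); auto. apply imp_mono2. apply Hmo. apply (ble_jl (LW A HA)).
      * apply Pu with (wimp B y (i c2)); auto. apply imp_mono2. apply Hmo. apply (ble_jr (LW A HA)).
  - intros x [q [Hq h1]] [c [Hc h2]]. apply Hc. apply (HR q c); auto.
    rewrite iimp. apply Pu with (wimp B x (i c)); auto. apply imp_anti1; auto.
  - exists Q'. split; [exact HQ'|split].
    + apply (R_close B HB P' Q' Il); auto.
      intros x y Hxy [c [Hc h]]. exists c. split; auto.
      apply Pu with (wmeet B (wimp B x y) (wimp B y (i c))); [apply Pm; auto|]. apply imp_trans.
    + intros a. split; intro h.
      * apply NNPP. intro hn. apply (Hdis (i a)); auto. exists a. split; auto.
        rewrite (ax_ii B HB). exact P1.
      * apply HFQ. exists a. split; auto. apply ble_refl.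
Qed.

Lemma back_S A B (HA : is_WHB A) (HB : is_WHB B) i (Hi : whom A B i) (P' : B -> Prop) (Q : A -> Prop) :
  gpf (LW B HB) P' -> gpf (LW A HA) Q -> Srel A (fun a => P' (i a)) Q ->
  exists Q', gpf (LW B HB) Q' /\ Srel B P' Q' /\ forall a, Q' (i a) <-> Q a.
Proof.
  intros HP HQ HS. set (L := LW B HB).
  assert (Hmo := whom_mono A B HA HB i Hi).
  destruct Hi as [im [ij [iimp [icoimp [iz io]]]]].
  destruct HP as [P1 [P0 [Pm [Pu Pp]]]] eqn:EP.
  destruct HQ as [Q1 [Q0 [Qm [Qu Qp]]]].
  set (Fl := fun y => exists q, Q q /\ ~ P' (wcoimp B (i q) y)).
  set (Il := fun x => exists c, ~ Q c /\ ble L x (i c)).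
  destruct (max_ideal L Fl Il) as [Q' [HQ' [HFQ [Hdis Hmax]]]].
  - exists (i (wone A)). exists (wone A). split; auto. rewrite (ax_cc B HB). exact P0.
  - intros x y [q [Hq h1]] h2. exists q. split; auto. intro h. apply h1.
    apply Pu with (wcoimp B (i q) y); auto. apply coimp_anti2; auto.
  - intros x y [q1 [Hq1 h1]] [q2 [Hq2 h2]]. exists (wmeet A q1 q2). split; [apply Qm; auto|].
    simpl. rewrite (ax_cm B HB). intro h. destruct (Pp _ _ h) as [h'|h'].
    + apply h1. apply Pu with (wcoimp B (i (wmeet A q1 q2)) x); auto. apply coimp_mono1.
      apply Hmo. apply (ble_ml (LW A HA)).
    + apply h2. apply Pu with (wcoimp B (i (wmeet A q1 q2)) y); auto. apply coimp_mono1.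
      apply Hmo. apply (ble_mr (LW A HA)).
  - exists (i (wzero A)). exists (wzero A). split; auto. apply ble_refl.
  - intros x y [c [Hc h]] Hxy. exists c. split; auto. eapply ble_trans; eauto.
  - intros x y [c1 [Hc1 h1]] [c2 [Hc2 h2]]. exists (wjoin A c1 c2). split.
    + intro h. destruct (Qp _ _ h); auto.
    + simpl. rewrite ij. apply ble_jmono; auto.
  - intros x [q [Hq h1]] [c [Hc h2]]. apply h1.
    apply Pu with (wcoimp B (i q) (i c)); [|apply coimp_anti2; auto].
    rewrite <- icoimp. apply HS; auto.
  - exists Q'. split; [exact HQ'|split].
    + apply (S_close B HB P' Q' Fl); auto.
      intros w w' [q [Hq hw]] hw'.
      assert (h : P' (wcoimp B (i q) w')).
      { apply NNPP. intro hn. apply hw'. exists q. auto. }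
      assert (h2 := Pu _ _ h (coimp_trans B HB (i q) w w')).
      destruct (Pp _ _ h2); tauto.
    + intros a. split; intro h.
      * apply NNPP. intro hn. apply (Hdis (i a)); auto. exists a. split; auto. apply ble_refl.
      * apply HFQ. exists a. split; auto. rewrite (ax_cc B HB). exact P0.
Qed.

Lemma surj_pre A B (HA : is_WHB A) (HB : is_WHB B) i (Hi : whom A B i) (Hinj : injective i) (P : A -> Prop) :
  gpf (LW A HA) P -> exists P', gpf (LW B HB) P' /\ forall a, P' (i a) <-> P a.
Proof.
  intros HP. set (L := LW B HB).
  assert (Hmo := whom_mono A B HA HB i Hi).
  destruct Hi as [im [ij [iimp [icoimp [iz io]]]]].
  destruct HP as [P1 [P0 [Pm [Pu Pp]]]].
  set (Fl := fun y => exists p, P p /\ ble L (i p) y).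
  set (Il := fun x => exists c, ~ P c /\ ble L x (i c)).
  destruct (max_filter L Fl Il) as [Q' [HQ' [HFQ [Hdis Hmax]]]].
  - exists (i (wone A)). exists (wone A). split; auto. apply ble_refl.
  - intros x y [q [Hq h1]] h2. exists q. split; auto. eapply ble_trans; eauto.
  - intros x y [q1 [Hq1 h1]] [q2 [Hq2 h2]]. exists (wmeet A q1 q2). split; [apply Pm; auto|].
    simpl. rewrite im. apply ble_mono; auto.
  - exists (i (wzero A)). exists (wzero A). split; auto. apply ble_refl.
  - intros x y [c [Hc h]] Hxy. exists c. split; auto. eapply ble_trans; eauto.
  - intros x y [c1 [Hc1 h1]] [c2 [Hc2 h2]]. exists (wjoin A c1 c2). split.
    + intro h. destruct (Pp _ _ h); auto.
    + simpl. rewrite ij. apply ble_jmono; auto.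
  - intros x [p [Hp h1]] [c [Hc h2]]. apply Hc. apply Pu with p; auto.
    assert (h3 := ble_trans L _ _ _ h1 h2). unfold ble in h3; simpl in h3.
    rewrite <- im in h3. apply Hinj in h3. exact h3.
  - exists Q'. split; [exact HQ'|].
    intros a. split; intro h.
    + apply NNPP. intro hn. apply (Hdis (i a)); auto. exists a. split; auto. apply ble_refl.
    + apply HFQ. exists a. split; auto. apply ble_refl.
Qed.

Lemma chain_list {T'} (C : (T' -> Prop) -> Prop) :
  (exists N, C N) -> (forall N1 N2, C N1 -> C N2 -> incl_ N1 N2 \/ incl_ N2 N1) ->
  forall l : list T', (forall x, In x l -> exists N, C N /\ N x) -> exists N, C N /\ forall x, In x l -> N x.
Proof.
  intros [N0 H0] Htot l. induction l as [|a l IH]; intros Hl.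
  - exists N0. split; auto. intros x [].
  - destruct IH as [N1 [HN1 Hin]]. { intros x hx. apply Hl. right; auto. }
    destruct (Hl a (or_introl eq_refl)) as [N2 [HN2 Ha]].
    destruct (Htot N1 N2 HN1 HN2) as [h|h].
    + exists N2. split; auto. intros x [<-|hx]; auto.
    + exists N1. split; auto. intros x [<-|hx]; auto.
Qed.

Lemma filt_list {T'} (Zp : T' -> Prop) (c : T') (l : list T') :
  (forall x, In x l -> Zp x \/ x = c) -> exists l', (forall x, In x l' -> Zp x) /\ forall x, In x l -> In x l' \/ x = c.
Proof.
  induction l as [|a l IH]; intros Hl.
  - exists []. split; [intros x []|intros x []].
  - destruct IH as [l' [H1 H2]]. { intros x hx; apply Hl; right; auto. }
    destruct (Hl a (or_introl eq_refl)) as [ha|ha].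
    + exists (a :: l'). split.
      * intros x [<-|hx]; auto.
      * intros x [<-|hx]; [left; left; auto|]. destruct (H2 x hx); auto. left; right; auto.
    + exists l'. split; auto. intros x [<-|hx]; auto.
Qed.

Definition goodB (L : BDL) (C : L -> L -> Prop) (G : bool * L -> Prop) : Prop :=
  forall (l : list (L * L)) (fs is : list L),
    (forall x, In x l -> C (fst x) (snd x)) ->
    (forall x, In x fs -> G (true, x)) -> (forall y, In y is -> G (false, y)) ->
    exists P, gpf L P /\ (forall x, In x fs -> P x) /\ (forall y, In y is -> ~ P y) /\
      (forall x, In x l -> ~ (P (fst x) /\ ~ P (snd x))).

Lemma compactB (L : BDL) (C : L -> L -> Prop) :
  (forall P, gpf L P -> exists a b, C a b /\ P a /\ ~ P b) ->
  exists l : list (L * L), (forall x, In x l -> C (fst x) (snd x)) /\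
    forall P, gpf L P -> exists x, In x l /\ P (fst x) /\ ~ P (snd x).
Proof.
  intros Hcov. apply NNPP. intro Hno.
  assert (Hall : forall l : list (L * L), (forall x, In x l -> C (fst x) (snd x)) ->
     exists P, gpf L P /\ forall x, In x l -> ~ (P (fst x) /\ ~ P (snd x))).
  { intros l Hl. apply NNPP. intro hn. apply Hno. exists l. split; auto.
    intros P HP. apply NNPP. intro hn2. apply hn. exists P. split; auto.
    intros x hx h. apply hn2. exists x. tauto. }
  assert (G0 : goodB L C (fun _ => False)).
  { intros l fs is Hl Hf Hi. destruct (Hall l Hl) as [P [HP HPl]].
    exists P. split; auto. split; [intros x hx; destruct (Hf x hx)|].
    split; [intros y hy; destruct (Hi y hy)|auto]. }
  assert (Gch : forall Ch : (bool * L -> Prop) -> Prop,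
     (forall N, Ch N -> goodB L C N /\ incl_ (fun _ => False) N) -> (exists N, Ch N) ->
     (forall N1 N2, Ch N1 -> Ch N2 -> incl_ N1 N2 \/ incl_ N2 N1) ->
     goodB L C (fun x => exists N, Ch N /\ N x)).
  { intros Ch HCh Hne Htot l fs is Hl Hf Hi.
    destruct (chain_list Ch Hne Htot (map (fun x => (true, x)) fs ++ map (fun y => (false, y)) is))
      as [N [HN Hin]].
    { intros t ht. apply in_app_or in ht. destruct ht as [ht|ht]; apply in_map_iff in ht;
      destruct ht as [x [<- hx]]; auto. }
    destruct (HCh N HN) as [gN _].
    apply (gN l fs is Hl).
    - intros x hx. apply Hin. apply in_or_app. left. apply in_map_iff. eauto.
    - intros y hy. apply Hin. apply in_or_app. right. apply in_map_iff. eauto. }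
  destruct (zorn_pred (goodB L C) (fun _ => False) G0 Gch) as [M0 [gM [_ Mmax]]].
  assert (Hd : forall c, M0 (true, c) \/ M0 (false, c)).
  { intros c. apply NNPP. intro hn.
    assert (n1 : ~ M0 (true, c)) by tauto. assert (n2 : ~ M0 (false, c)) by tauto.
    set (G1 := fun t => M0 t \/ t = (true, c)).
    set (G2 := fun t => M0 t \/ t = (false, c)).
    destruct (classic (goodB L C G1)) as [g1|ng1].
    { apply n1. apply (Mmax G1 g1); [intros t ht; left; auto| right; auto]. }
    destruct (classic (goodB L C G2)) as [g2|ng2].
    { apply n2. apply (Mmax G2 g2); [intros t ht; left; auto| right; auto]. }
    apply ng1. intros l1 fs1 is1 hl1 hf1 hi1. apply NNPP. intro hn1.
    apply ng2. intros l2 fs2 is2 hl2 hf2 hi2. apply NNPP. intro hn2.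
    destruct (filt_list (fun x => M0 (true, x)) c fs1) as [fs1' [A1 A2]].
    { intros x hx. destruct (hf1 x hx) as [h|h]; [left; auto|right; congruence]. }
    destruct (filt_list (fun x => M0 (false, x)) c is2) as [is2' [B1 B2]].
    { intros x hx. destruct (hi2 x hx) as [h|h]; [left; auto|right; congruence]. }
    destruct (gM (l1 ++ l2) (fs1' ++ fs2) (is1 ++ is2')) as [P [HP [Pf [Pi Pl]]]].
    - intros x hx. apply in_app_or in hx. destruct hx; auto.
    - intros x hx. apply in_app_or in hx. destruct hx as [hx|hx]; auto.
      destruct (hf2 x hx) as [h|h]; [auto|congruence].
    - intros x hx. apply in_app_or in hx. destruct hx as [hx|hx]; auto.
      destruct (hi1 x hx) as [h|h]; [auto|congruence].
    - destruct (classic (P c)) as [pc|pc].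
      + apply hn1. exists P. split; auto. split; [|split].
        * intros x hx. destruct (A2 x hx) as [h|h]; [apply Pf; apply in_or_app; auto|subst; auto].
        * intros y hy. apply Pi. apply in_or_app; auto.
        * intros x hx. apply Pl. apply in_or_app; auto.
      + apply hn2. exists P. split; auto. split; [|split].
        * intros x hx. apply Pf. apply in_or_app; auto.
        * intros y hy. destruct (B2 y hy) as [h|h]; [apply Pi; apply in_or_app; auto|subst; auto].
        * intros x hx. apply Pl. apply in_or_app; auto. }
  assert (Hd' : forall c, ~ M0 (true, c) -> M0 (false, c)) by (intros c h; destruct (Hd c); tauto).
  set (P0 := fun x => M0 (true, x)).
  assert (HP0 : gpf L P0).
  { split; [|split; [|split; [|split]]].
    - apply NNPP. intro h. destruct (gM [] [] [bo L]) as [P [[P1 _] [_ [Pi _]]]].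
      + intros x [].
      + intros x [].
      + intros y [<-|[]]. apply Hd'. exact h.
      + apply (Pi (bo L)); auto. left; auto.
    - intro h. destruct (gM [] [bz L] []) as [P [[_ [P0' _]] [Pf _]]].
      + intros x [].
      + intros x [<-|[]]. exact h.
      + intros y [].
      + apply P0'. apply Pf. left; auto.
    - intros a b ha hb. apply NNPP. intro h. destruct (gM [] [a; b] [bm L a b]) as [P [[_ [_ [Pm _]]] [Pf [Pi _]]]].
      + intros x [].
      + intros x [<-|[<-|[]]]; auto.
      + intros y [<-|[]]. apply Hd'. exact h.
      + apply (Pi (bm L a b)); [left; auto|]. apply Pm; apply Pf; simpl; auto.
    - intros a b ha hab. apply NNPP. intro h. destruct (gM [] [a] [b]) as [P [[_ [_ [_ [Pu _]]]] [Pf [Pi _]]]].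
      + intros x [].
      + intros x [<-|[]]; auto.
      + intros y [<-|[]]. apply Hd'. exact h.
      + apply (Pi b); [left; auto|]. apply Pu with a; auto. apply Pf; simpl; auto.
    - intros a b hab. apply NNPP. intro h. destruct (gM [] [bj L a b] [a; b]) as [P [[_ [_ [_ [_ Pp]]]] [Pf [Pi _]]]].
      + intros x [].
      + intros x [<-|[]]; auto.
      + intros y [<-|[<-|[]]]; apply Hd'; intro; apply h; auto.
      + destruct (Pp a b) as [h'|h']; [apply Pf; simpl; auto| |].
        * apply (Pi a); simpl; auto.
        * apply (Pi b); simpl; auto. }
  destruct (Hcov P0 HP0) as [a [b [Cab [Pa Pb]]]].
  destruct (gM [(a, b)] [a] [b]) as [P [_ [Pf [Pi Pl]]]].
  - intros x [<-|[]]; auto.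
  - intros x [<-|[]]; auto.
  - intros y [<-|[]]. apply Hd'. exact Pb.
  - apply (Pl (a, b)); [left; auto|]. simpl. split; [apply Pf; simpl; auto| apply Pi; simpl; auto].
Qed.

Lemma pred_ext {X0} (U V : X0 -> Prop) : (forall x, U x <-> V x) -> U = V.
Proof. intro h. apply functional_extensionality. intro x. apply propositional_extensionality. auto. Qed.

Lemma mk_clop_val A S : clopenA A S -> proj1_sig (mk_clop A S) = S.
Proof. intro h. unfold mk_clop. destruct (excluded_middle_informative (clopenA A S)); [reflexivity|contradiction]. Qed.

Lemma clop_eq A (U V : Clop A) : (forall P, proj1_sig U P <-> proj1_sig V P) -> U = V.
Proof.
  destruct U as [U hU], V as [V hV]; simpl; intro h.
  apply pred_ext in h. subst V. f_equal. apply proof_irrelevance.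
Qed.

Lemma open_ext A U V : (forall P, U P <-> V P) -> openA A U -> openA A V.
Proof. intros h hU. apply pred_ext in h. subst; auto. Qed.
Lemma clopen_ext A U V : (forall P, U P <-> V P) -> clopenA A U -> clopenA A V.
Proof. intros h hU. apply pred_ext in h. subst; auto. Qed.

Lemma open_and A U V : openA A U -> openA A V -> openA A (fun P => U P /\ V P).
Proof.
  intros hU hV P [hu hv]. destruct (hU P hu) as [l1 [a1 b1]]. destruct (hV P hv) as [l2 [a2 b2]].
  exists (l1 ++ l2). split.
  - intros s hs. apply in_app_or in hs. destruct hs; auto.
  - intros Q hQ. split; [apply b1|apply b2]; intros s hs; apply hQ; apply in_or_app; auto.
Qed.
Lemma open_or A U V : openA A U -> openA A V -> openA A (fun P => U P \/ V P).
Proof.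
  intros hU hV P [hu|hv].
  - destruct (hU P hu) as [l [a b]]. exists l. split; [exact a|intros Q hQ; left; auto].
  - destruct (hV P hv) as [l [a b]]. exists l. split; [exact a|intros Q hQ; right; auto].
Qed.
Lemma clopen_neg A U : clopenA A U -> clopenA A (fun P => ~ U P).
Proof.
  intros [h1 h2]. split; [exact h2|]. apply open_ext with U; [|exact h1]. intro P; split; intro; tauto.
Qed.
Lemma clopen_and A U V : clopenA A U -> clopenA A V -> clopenA A (fun P => U P /\ V P).
Proof.
  intros [u1 u2] [v1 v2]. split; [apply open_and; auto|].
  apply open_ext with (fun P => ~ U P \/ ~ V P); [intro P; tauto|]. apply open_or; auto.
Qed.
Lemma clopen_or A U V : clopenA A U -> clopenA A V -> clopenA A (fun P => U P \/ V P).
Proof.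
  intros [u1 u2] [v1 v2]. split; [apply open_or; auto|].
  apply open_ext with (fun P => ~ U P /\ ~ V P); [intro P; tauto|]. apply open_and; auto.
Qed.
Lemma clopen_True A : clopenA A (fun _ => True).
Proof. apply clopen_ext with (fun P => ~ False); [intro; tauto|]. apply clopen_neg, clopen_empty. Qed.
Lemma clopen_sigma A a : clopenA A (sigma_ A a).
Proof.
  split.
  - intros P h. exists [(true, a)]. split.
    + intros s [<-|[]]. exact h.
    + intros Q hQ. apply (hQ (true, a)). left; auto.
  - intros P h. exists [(false, a)]. split.
    + intros s [<-|[]]. exact h.
    + intros Q hQ. apply (hQ (false, a)). left; auto.
Qed.
Lemma clopen_all_list A {I} (l : list I) (phi : I -> X A -> Prop) :
  (forall x, In x l -> clopenA A (phi x)) -> clopenA A (fun P => forall x, In x l -> phi x P).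
Proof.
  induction l as [|a l IH]; intros h.
  - apply clopen_ext with (fun _ => True); [|apply clopen_True]. intros P; split; [intros _ x []|auto].
  - apply clopen_ext with (fun P => phi a P /\ (forall x, In x l -> phi x P)).
    + intros P; split.
      * intros [h1 h2] x [<-|hx]; auto.
      * intros h1. split; [apply h1; left; auto|intros x hx; apply h1; right; auto].
    + apply clopen_and; [apply h; left; auto|apply IH; intros x hx; apply h; right; auto].
Qed.

Definition pgpf A (H : is_WHB A) (P : X A) : gpf (LW A H) (proj1_sig P) := proj2_sig P.

Lemma pf_meet A (H : is_WHB A) (P : X A) a b : proj1_sig P (wmeet A a b) <-> proj1_sig P a /\ proj1_sig P b.
Proof.
  destruct (pgpf A H P) as [_ [_ [Pm [Pu _]]]]. split.
  - intro h. split; [apply Pu with (wmeet A a b); auto; apply (ble_ml (LW A H))|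
                     apply Pu with (wmeet A a b); auto; apply (ble_mr (LW A H))].
  - intros [h1 h2]. apply Pm; auto.
Qed.
Lemma pf_join A (H : is_WHB A) (P : X A) a b : proj1_sig P (wjoin A a b) <-> proj1_sig P a \/ proj1_sig P b.
Proof.
  destruct (pgpf A H P) as [_ [_ [Pm [Pu Pp]]]]. split.
  - apply Pp.
  - intros [h|h]; [apply Pu with a; auto; apply (ble_jl (LW A H))|apply Pu with b; auto; apply (ble_jr (LW A H))].
Qed.
Lemma pf_one A (H : is_WHB A) (P : X A) : proj1_sig P (wone A).
Proof. apply (pgpf A H P). Qed.
Lemma pf_zero A (H : is_WHB A) (P : X A) : ~ proj1_sig P (wzero A).
Proof. apply (pgpf A H P). Qed.

Lemma subb_list A (H : is_WHB A) (ls : list (bool * A)) :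
  exists a b, forall P : X A, (forall s, In s ls -> subb A s P) <-> (proj1_sig P a /\ ~ proj1_sig P b).
Proof.
  induction ls as [|[[|] c] ls IH].
  - exists (wone A), (wzero A). intros P. split.
    + intros _. split; [apply pf_one|apply pf_zero]; auto.
    + intros _ s [].
  - destruct IH as [a [b h]]. exists (wmeet A a c), b. intros P. rewrite (pf_meet A H). split.
    + intros hs. assert (h1 := proj1 (h P) (fun s hs' => hs s (or_intror hs'))).
      assert (h2 := hs (true, c) (or_introl eq_refl)). unfold subb, sigma_ in h2; simpl in h2. tauto.
    + intros [[h1 h2] h3] s [<-|hs]; [exact h2|]. apply (proj2 (h P)); auto.
  - destruct IH as [a [b h]]. exists a, (wjoin A b c). intros P. rewrite (pf_join A H). split.
    + intros hs. assert (h1 := proj1 (h P) (fun s hs' => hs s (or_intror hs'))).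
      assert (h2 := hs (false, c) (or_introl eq_refl)). unfold subb, sigma_ in h2; simpl in h2. tauto.
    + intros [h1 h2] s [<-|hs]; [unfold subb, sigma_; simpl; tauto|]. apply (proj2 (h P)); tauto.
Qed.

Lemma normal_form A (H : is_WHB A) (U : X A -> Prop) : clopenA A U ->
  exists l : list (A * A), forall P : X A, U P <-> forall x, In x l -> ~ (proj1_sig P (fst x) /\ ~ proj1_sig P (snd x)).
Proof.
  intros [hU hnU].
  set (Lt := fun a b => forall Q : X A, proj1_sig Q a /\ ~ proj1_sig Q b -> U Q).
  set (Rt := fun a b => forall Q : X A, proj1_sig Q a /\ ~ proj1_sig Q b -> ~ U Q).
  destruct (compactB (LW A H) (fun a b => Lt a b \/ Rt a b)) as [l [Hl Hcov]].
  - intros P HP. set (p := exist _ P HP : X A).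
    destruct (classic (U p)) as [h|h].
    + destruct (hU p h) as [ls [h1 h2]]. destruct (subb_list A H ls) as [a [b hab]].
      exists a, b. split; [left|].
      * intros Q hQ. apply h2. apply hab. auto.
      * apply (hab p). auto.
    + destruct (hnU p h) as [ls [h1 h2]]. destruct (subb_list A H ls) as [a [b hab]].
      exists a, b. split; [right|].
      * intros Q hQ. apply h2. apply hab. auto.
      * apply (hab p). auto.
  - assert (Hf : exists l', (forall x, In x l' -> Rt (fst x) (snd x)) /\ forall x, In x l -> Lt (fst x) (snd x) \/ In x l').
    { clear Hcov. induction l as [|y l IH].
      - exists []. split; intros x [].
      - destruct IH as [l' [h1 h2]]. { intros x hx; apply Hl; right; auto. }
        destruct (Hl y (or_introl eq_refl)) as [hy|hy].
        + exists l'. split; auto. intros x [<-|hx]; auto.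
        + exists (y :: l'). split.
          * intros x [<-|hx]; auto.
          * intros x [<-|hx]; [right; left; auto|]. destruct (h2 x hx); auto. right; right; auto. }
    destruct Hf as [l' [h1 h2]]. exists l'. intros P. split.
    + intros hP x hx hh. apply (h1 x hx P hh). exact hP.
    + intros hP. destruct (Hcov (proj1_sig P) (proj2_sig P)) as [x [hx hh]].
      destruct (h2 x hx) as [h|h].
      * destruct P as [P pP]. apply (h (exist _ P pP)). exact hh.
      * exfalso. apply (hP x h). exact hh.
Qed.

Lemma GA_form A (H : is_WHB A) (U : X A -> Prop) (l : list (A * A)) :
  (forall P : X A, U P <-> forall x, In x l -> ~ (proj1_sig P (fst x) /\ ~ proj1_sig P (snd x))) ->
  forall P : X A, GA A U P <-> forall x, In x l -> proj1_sig P (wimp A (fst x) (snd x)).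
Proof.
  intros hU P. split.
  - intros hG x hx. apply NNPP. intro hn.
    destruct (imp_witness A H (proj1_sig P) (fst x) (snd x) (pgpf A H P) hn) as [Q [HQ [HR [Qa Qb]]]].
    assert (hq := hG (exist (prime_filter A) Q HQ) HR). apply ((proj1 (hU _) hq) x hx). simpl. auto.
  - intros hP Q hR. apply hU. intros x hx [h1 h2]. apply h2. apply (hR (fst x) (snd x)); auto.
Qed.

Lemma HA_form A (H : is_WHB A) (U : X A -> Prop) (l : list (A * A)) :
  (forall P : X A, U P <-> forall x, In x l -> ~ (proj1_sig P (fst x) /\ ~ proj1_sig P (snd x))) ->
  forall P : X A, HA A U P <-> forall x, In x l -> ~ proj1_sig P (wcoimp A (fst x) (snd x)).
Proof.
  intros hU P. split.
  - intros hH x hx hn.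
    destruct (coimp_witness A H (proj1_sig P) (fst x) (snd x) (pgpf A H P) hn) as [Q [HQ [HS [Qa Qb]]]].
    assert (hq := hH (exist (prime_filter A) Q HQ) HS). apply ((proj1 (hU _) hq) x hx). simpl. auto.
  - intros hP Q hS. apply hU. intros x hx [h1 h2]. apply (hP x hx). apply hS; auto.
Qed.

Lemma GA_clopen A (H : is_WHB A) U : clopenA A U -> clopenA A (GA A U).
Proof.
  intros hU. destruct (normal_form A H U hU) as [l hl].
  apply clopen_ext with (fun P => forall x, In x l -> sigma_ A (wimp A (fst x) (snd x)) P).
  - intros P. rewrite (GA_form A H U l hl). reflexivity.
  - apply clopen_all_list. intros; apply clopen_sigma.
Qed.
Lemma HA_clopen A (H : is_WHB A) U : clopenA A U -> clopenA A (HA A U).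
Proof.
  intros hU. destruct (normal_form A H U hU) as [l hl].
  apply clopen_ext with (fun P => forall x, In x l -> ~ sigma_ A (wcoimp A (fst x) (snd x)) P).
  - intros P. rewrite (HA_form A H U l hl). reflexivity.
  - apply clopen_all_list. intros; apply clopen_neg, clopen_sigma.
Qed.

Lemma Tmeet_val A (U V : Clop A) : proj1_sig (tmeet (T A) U V) = fun P => proj1_sig U P /\ proj1_sig V P.
Proof. apply mk_clop_val. apply clopen_and; apply proj2_sig. Qed.
Lemma Tjoin_val A (U V : Clop A) : proj1_sig (tjoin (T A) U V) = fun P => proj1_sig U P \/ proj1_sig V P.
Proof. apply mk_clop_val. apply clopen_or; apply proj2_sig. Qed.
Lemma Tneg_val A (U : Clop A) : proj1_sig (tneg (T A) U) = fun P => ~ proj1_sig U P.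
Proof. apply mk_clop_val. apply clopen_neg; apply proj2_sig. Qed.
Lemma Tzero_val A : proj1_sig (tzero (T A)) = fun _ => False.
Proof. apply mk_clop_val. apply clopen_empty. Qed.
Lemma Tone_val A : proj1_sig (tone (T A)) = fun _ => True.
Proof. apply mk_clop_val. apply clopen_True. Qed.
Lemma TG_val A (H : is_WHB A) (U : Clop A) : proj1_sig (tG (T A) U) = GA A (proj1_sig U).
Proof. apply mk_clop_val. apply GA_clopen; auto. apply proj2_sig. Qed.
Lemma TH_val A (H : is_WHB A) (U : Clop A) : proj1_sig (tH (T A) U) = HA A (proj1_sig U).
Proof. apply mk_clop_val. apply HA_clopen; auto. apply proj2_sig. Qed.

Definition sgm (A : WSig) (a : A) : Clop A := exist _ (sigma_ A a) (clopen_sigma A a).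

Lemma sgm_whom A (H : is_WHB A) : whom A (M (T A)) (sgm A).
Proof.
  split; [|split; [|split; [|split; [|split]]]]; intros; apply clop_eq; intros P;
    cbn [M wmeet wjoin wimp wcoimp wzero wone].
  - rewrite Tmeet_val. apply (pf_meet A H).
  - rewrite Tjoin_val. apply (pf_join A H).
  - rewrite (TG_val A H), Tjoin_val, Tneg_val.
    rewrite (GA_form A H _ [(a, b)]).
    + simpl. split; [intros h x [<-|[]]; exact h|intros h; apply (h (a, b)); left; auto].
    + intros Q. simpl. unfold sigma_. split.
      * intros h x [<-|[]]; simpl; tauto.
      * intros h. specialize (h (a, b) (or_introl eq_refl)). simpl in h. tauto.
  - unfold tP. rewrite Tneg_val, (TH_val A H), Tneg_val, Tmeet_val, Tneg_val.
    rewrite (HA_form A H _ [(a, b)]).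
    + simpl. split.
      * intros h1 h2. apply (h2 (a, b)); [left; auto|exact h1].
      * intros h. apply NNPP. intro hn. apply h. intros x [<-|[]]. exact hn.
    + intros Q. simpl. unfold sigma_. split.
      * intros h x [<-|[]]; simpl; tauto.
      * intros h. specialize (h (a, b) (or_introl eq_refl)). simpl in h. tauto.
  - rewrite Tzero_val. simpl. unfold sigma_. split; [apply (pf_zero A H)|intros []].
  - rewrite Tone_val. simpl. unfold sigma_. split; [auto|intros _; apply (pf_one A H)].
Qed.

Lemma sgm_inj A (H : is_WHB A) : injective (sgm A).
Proof.
  intros a b h. apply (f_equal (@proj1_sig _ _)) in h. simpl in h.
  assert (k : forall x y, sigma_ A x = sigma_ A y -> ble (LW A H) x y).
  { intros x y e. apply NNPP. intro hn. destruct (pft A H x y hn) as [Q [HQ [Qx Qy]]].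
    apply Qy. change (sigma_ A y (exist (prime_filter A) Q HQ)). rewrite <- e. exact Qx. }
  apply (ble_antisym (LW A H)); apply k; auto.
Qed.

Definition preU (A B : WSig) (i : A -> B) (U : X A -> Prop) : X B -> Prop :=
  fun P' => exists h : prime_filter A (fun a => proj1_sig P' (i a)), U (exist _ _ h).

Definition Ti (A B : WSig) (i : A -> B) (U : Clop A) : Clop B := mk_clop B (preU A B i (proj1_sig U)).

Definition Xi (A B : WSig) (HA : is_WHB A) (HB : is_WHB B) (i : A -> B) (Hi : whom A B i) (P : X B) : X A :=
  exist (prime_filter A) (fun a => proj1_sig P (i a)) (gpf_pre A B HA HB i Hi _ (proj2_sig P)).

Lemma X_eq A (P Q : X A) : (forall a, proj1_sig P a <-> proj1_sig Q a) -> P = Q.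
Proof.
  destruct P as [P hP], Q as [Q hQ]; simpl; intro h.
  apply pred_ext in h. subst Q. f_equal. apply proof_irrelevance.
Qed.

Lemma preU_iff (A B : WSig) (HA : is_WHB A) (HB : is_WHB B) (i : A -> B) (Hi : whom A B i) (U : X A -> Prop) (P' : X B) : preU A B i U P' <-> U (Xi A B HA HB i Hi P').
Proof.
  unfold preU, Xi. split.
  - intros [h hU]. replace (gpf_pre A B HA HB i Hi _ (proj2_sig P')) with h by apply proof_irrelevance. exact hU.
  - intros hU. eexists. exact hU.
Qed.

Lemma open_pre (A B : WSig) (HA : is_WHB A) (HB : is_WHB B) (i : A -> B) (Hi : whom A B i) (U : X A -> Prop) : openA A U -> openA B (fun P' => U (Xi A B HA HB i Hi P')).
Proof.
  intros hU P' hP. destruct (hU _ hP) as [l [h1 h2]].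
  exists (map (fun s => (fst s, i (snd s))) l). split.
  - intros s hs. apply in_map_iff in hs. destruct hs as [[b a] [<- hs]].
    apply h1 in hs. exact hs.
  - intros Q' hQ. apply h2. intros [b a] hs. apply (hQ (b, i a)). apply in_map_iff.
    exists (b, a). auto.
Qed.

Lemma pre_clopen (A B : WSig) (HA : is_WHB A) (HB : is_WHB B) (i : A -> B) (Hi : whom A B i) (U : X A -> Prop) : clopenA A U -> clopenA B (preU A B i U).
Proof.
  intros [h1 h2]. split.
  - apply open_ext with (fun P' => U (Xi A B HA HB i Hi P')); [intro; symmetry; apply (preU_iff A B HA HB i Hi)|].
    apply open_pre; auto.
  - apply open_ext with (fun P' => ~ U (Xi A B HA HB i Hi P')); [intro; rewrite (preU_iff A B HA HB i Hi); tauto|].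
    apply (open_pre A B HA HB i Hi (fun P => ~ U P)); auto.
Qed.

Lemma Ti_val (A B : WSig) (HA : is_WHB A) (HB : is_WHB B) (i : A -> B) (Hi : whom A B i) (U : Clop A) (P' : X B) : proj1_sig (Ti A B i U) P' <-> proj1_sig U (Xi A B HA HB i Hi P').
Proof.
  unfold Ti. rewrite (mk_clop_val B _ (pre_clopen A B HA HB i Hi _ (proj2_sig U))).
  apply preU_iff.
Qed.

Lemma Ti_thom A B (HA : is_WHB A) (HB : is_WHB B) i (Hi : whom A B i) : thom (T A) (T B) (Ti A B i).
Proof.
  split; [|split; [|split; [|split; [|split; [|split]]]]]; intros; apply clop_eq; intros P';
    rewrite (Ti_val A B HA HB i Hi).
  - rewrite !Tmeet_val. rewrite !(Ti_val A B HA HB i Hi). reflexivity.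
  - rewrite !Tjoin_val. rewrite !(Ti_val A B HA HB i Hi). reflexivity.
  - rewrite !Tneg_val. rewrite !(Ti_val A B HA HB i Hi). reflexivity.
  - rewrite !Tzero_val. reflexivity.
  - rewrite !Tone_val. reflexivity.
  - rewrite (TG_val A HA), (TG_val B HB). split.
    + intros hG Q' hR. apply (Ti_val A B HA HB i Hi). apply hG.
      intros x y h1 h2. apply (hR (i x) (i y)); auto.
      assert (e := proj1 (proj2 (proj2 Hi)) x y). rewrite <- e. exact h1.
    + intros hG Q hR.
      destruct (back_R A B HA HB i Hi (proj1_sig P') (proj1_sig Q) (proj2_sig P') (proj2_sig Q) hR)
        as [Q' [HQ' [HR' Hpre]]].
      assert (E : Xi A B HA HB i Hi (exist (prime_filter B) Q' HQ') = Q).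
      { apply X_eq. intro a0. simpl. apply Hpre. }
      rewrite <- E. apply (Ti_val A B HA HB i Hi). apply hG. exact HR'.
  - rewrite (TH_val A HA), (TH_val B HB). split.
    + intros hH Q' hS. apply (Ti_val A B HA HB i Hi). apply hH.
      intros x y h1 h2. simpl. assert (e := proj1 (proj2 (proj2 (proj2 Hi))) x y). rewrite e. apply hS; auto.
    + intros hH Q hS.
      destruct (back_S A B HA HB i Hi (proj1_sig P') (proj1_sig Q) (proj2_sig P') (proj2_sig Q) hS)
        as [Q' [HQ' [HS' Hpre]]].
      assert (E : Xi A B HA HB i Hi (exist (prime_filter B) Q' HQ') = Q).
      { apply X_eq. intro a0. simpl. apply Hpre. }
      rewrite <- E. apply (Ti_val A B HA HB i Hi). apply hH. exact HS'.
Qed.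

Lemma Ti_inj A B (HA : is_WHB A) (HB : is_WHB B) i (Hi : whom A B i) (Hinj : injective i) : injective (Ti A B i).
Proof.
  intros U V e. apply clop_eq. intros P.
  destruct (surj_pre A B HA HB i Hi Hinj (proj1_sig P) (proj2_sig P)) as [P' [HP' Hpre]].
  assert (E : Xi A B HA HB i Hi (exist (prime_filter B) P' HP') = P).
  { apply X_eq. intro a0. simpl. apply Hpre. }
  rewrite <- E. rewrite <- !(Ti_val A B HA HB i Hi). rewrite e. reflexivity.
Qed.

Lemma Ti_sgm A B (HA : is_WHB A) (HB : is_WHB B) i (Hi : whom A B i) a : Ti A B i (sgm A a) = sgm B (i a).
Proof. apply clop_eq. intros P'. rewrite (Ti_val A B HA HB i Hi). simpl. reflexivity. Qed.

Definition LT (B : TSig) (H : is_tense B) : BDL :=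
  {| bc := B; bm := tmeet B; bj := tjoin B; bz := tzero B; bo := tone B; bax := proj1 H |}.

Lemma compl_unique B (H : is_tense B) x y : tmeet B x y = tzero B -> tjoin B x y = tone B -> y = tneg B x.
Proof.
  intros h1 h2. set (L := LT B H).
  assert (Hc1 := proj1 (proj2 H)). assert (Hc2 := proj1 (proj2 (proj2 H))).
  transitivity (tmeet B y (tneg B x)).
  - rewrite <- (b_mo L y) at 1. simpl. rewrite <- (Hc2 x).
    change (bm L y (bj L x (tneg B x)) = bm L y (tneg B x)).
    rewrite b_distr. rewrite (b_mcomm L y x). simpl. rewrite h1.
    change (bj L (bz L) (bm L y (tneg B x)) = bm L y (tneg B x)). rewrite b_jcomm. apply b_jz.
  - symmetry. rewrite <- (b_mo L (tneg B x)) at 1. simpl. rewrite <- h2.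
    change (bm L (tneg B x) (bj L x y) = bm L y (tneg B x)).
    rewrite b_distr. rewrite (b_mcomm L (tneg B x) x). simpl. rewrite Hc1.
    change (bj L (bz L) (bm L (tneg B x) y) = bm L y (tneg B x)). rewrite b_jcomm, b_jz. apply b_mcomm.
Qed.

Lemma t_mcomm B (H : is_tense B) a b : tmeet B a b = tmeet B b a.
Proof. exact (b_mcomm (LT B H) a b). Qed.
Lemma t_jcomm B (H : is_tense B) a b : tjoin B a b = tjoin B b a.
Proof. exact (b_jcomm (LT B H) a b). Qed.
Lemma t_mz B (H : is_tense B) a : tmeet B a (tzero B) = tzero B.
Proof. exact (b_mz (LT B H) a). Qed.
Lemma t_jz B (H : is_tense B) a : tjoin B a (tzero B) = a.
Proof. exact (b_jz (LT B H) a). Qed.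
Lemma t_mo B (H : is_tense B) a : tmeet B a (tone B) = a.
Proof. exact (b_mo (LT B H) a). Qed.
Lemma t_jo B (H : is_tense B) a : tjoin B a (tone B) = tone B.
Proof. exact (b_jo (LT B H) a). Qed.

Lemma negneg B (H : is_tense B) x : tneg B (tneg B x) = x.
Proof.
  symmetry. apply (compl_unique B H).
  - rewrite (t_mcomm B H). apply H.
  - rewrite (t_jcomm B H). apply H.
Qed.
Lemma neg_one B (H : is_tense B) : tneg B (tone B) = tzero B.
Proof.
  symmetry. apply (compl_unique B H).
  - apply (t_mz B H).
  - apply (t_jz B H).
Qed.
Lemma neg_zero B (H : is_tense B) : tneg B (tzero B) = tone B.
Proof.
  symmetry. apply (compl_unique B H).
  - apply (t_mo B H).
  - apply (t_jo B H).
Qed.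

Lemma G_as_imp B (H : is_tense B) x : tG B x = wimp (M B) (wone (M B)) x.
Proof.
  simpl. rewrite (neg_one B H). rewrite (t_jcomm B H), (t_jz B H). reflexivity.
Qed.
Lemma H_as_coimp B (H : is_tense B) x : tH B x = tneg B (wcoimp (M B) (tneg B x) (wzero (M B))).
Proof.
  simpl. unfold tP. rewrite (neg_zero B H).
  rewrite (t_mo B H). rewrite !(negneg B H). reflexivity.
Qed.

Lemma whom_thom B C (HB : is_tense B) (HC : is_tense C) f : whom (M B) (M C) f -> thom B C f.
Proof.
  intros [fm [fj [fi [fc [fz fo]]]]]. simpl in *.
  assert (fn : forall a, f (tneg B a) = tneg C (f a)).
  { intros a. apply (compl_unique C HC).
    - rewrite <- fm. destruct HB as [_ [h _]]. rewrite h. exact fz.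
    - rewrite <- fj. destruct HB as [_ [_ [h _]]]. rewrite h. exact fo. }
  split; [|split; [|split; [|split; [|split; [|split]]]]]; auto.
  - intros a. rewrite (G_as_imp B HB), (G_as_imp C HC). simpl. rewrite fi. rewrite fo. reflexivity.
  - intros a. rewrite (H_as_coimp B HB), (H_as_coimp C HC). simpl.
    rewrite fn. rewrite fc. rewrite fn, fz. reflexivity.
Qed.

Lemma thom_whom B C f : thom B C f -> whom (M B) (M C) f.
Proof.
  intros [fm [fj [fn [fz [fo [fG fH]]]]]].
  split; [|split; [|split; [|split; [|split]]]]; simpl; intros; unfold tP;
    repeat (rewrite ?fm, ?fj, ?fn, ?fz, ?fo, ?fG, ?fH); reflexivity.
Qed.

Lemma whom_comp A B C f g : whom A B f -> whom B C g -> whom A C (fun x => g (f x)).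
Proof.
  intros [fm [fj [fi [fc [fz fo]]]]] [gm [gj [gi [gc [gz go]]]]].
  split; [|split; [|split; [|split; [|split]]]]; intros;
    repeat (rewrite ?fm, ?fj, ?fi, ?fc, ?fz, ?fo, ?gm, ?gj, ?gi, ?gc, ?gz, ?go); reflexivity.
Qed.

Lemma inj_comp {X1 X2 X3 : Type} (f : X1 -> X2) (g : X2 -> X3) : injective f -> injective g -> injective (fun x => g (f x)).
Proof. intros hf hg x y e. apply hf, hg, e. Qed.

Theorem theorem6p25 (K : WSig -> Prop) (N : TSig -> Prop) :
  whb_variety K -> tense_variety N -> tense_companion K N ->
  (w_amalgamation K <-> t_amalgamation N).
Proof.
  intros [EK HK] [EN HN] [cKN cNK].
  assert (KW : forall A, K A -> is_WHB A) by (intros A h; apply HK in h; apply h).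
  assert (NT : forall B, N B -> is_tense B) by (intros B h; apply HN in h; apply h).
  split.
  - intros wam A B C i j nA nB nC hi ii hj ij.
    destruct (wam (M A) (M B) (M C) i j (cNK A nA) (cNK B nB) (cNK C nC)
                (thom_whom A B i hi) ii (thom_whom A C j hj) ij)
      as [D [h [k [kD [hh [ih [hk [ik comm]]]]]]]].
    assert (HD := KW D kD).
    exists (T D), (fun x => sgm D (h x)), (fun x => sgm D (k x)).
    split; [apply cKN; auto|].
    split; [apply whom_thom; [apply NT; auto|apply NT, cKN; auto|apply whom_comp with D; auto; apply sgm_whom; auto]|].
    split; [apply inj_comp; auto; apply sgm_inj; auto|].
    split; [apply whom_thom; [apply NT; auto|apply NT, cKN; auto|apply whom_comp with D; auto; apply sgm_whom; auto]|].
    split; [apply inj_comp; auto; apply sgm_inj; auto|].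
    intros a. simpl. rewrite comm. reflexivity.
  - intros tam A B C i j kA kB kC hi ii hj ij.
    assert (HA := KW A kA). assert (HB := KW B kB). assert (HC := KW C kC).
    destruct (tam (T A) (T B) (T C) (Ti A B i) (Ti A C j) (cKN A kA) (cKN B kB) (cKN C kC)
                (Ti_thom A B HA HB i hi) (Ti_inj A B HA HB i hi ii)
                (Ti_thom A C HA HC j hj) (Ti_inj A C HA HC j hj ij))
      as [D [h [k [nD [hh [ih [hk [ik comm]]]]]]]].
    exists (M D), (fun x => h (sgm B x)), (fun x => k (sgm C x)).
    split; [apply cNK; auto|].
    split; [apply whom_comp with (M (T B)); [apply sgm_whom; auto|apply thom_whom; auto]|].
    split; [apply inj_comp; auto; apply sgm_inj; auto|].
    split; [apply whom_comp with (M (T C)); [apply sgm_whom; auto|apply thom_whom; auto]|].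
    split; [apply inj_comp; auto; apply sgm_inj; auto|].
    intros a. rewrite <- (Ti_sgm A B HA HB i hi), <- (Ti_sgm A C HA HC j hj). apply comm.
Qed.
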